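(* Let $m$ be a positive integer and let $\Delta$ be a $(d-1)$-dimensional balanced simplicial complex (coloring $\kappa:V(\Delta)\to[d]$) that is $m$-Buchsbaum* over $\mathbf{k}$. Then for every nonempty proper subset $S\subsetneq[d]$, the rank-selected subcomplex $\Delta_S$ is $m$-Buchsbaum* over $\mathbf{k}$.
   Context: All complexes are finite; homology is reduced with coefficients in a fixed field $\mathbf{k}$. $\mathrm{lk}_\Delta(F)=\{\sigma\in\Delta:\sigma\cap F=\emptyset,\sigma\cup F\in\Delta\}$; for $A\subseteq V(\Delta)$, $\Delta-A$ is the induced subcomplex on $V(\Delta)\setminus A$. A $(d-1)$-dimensional complex is Buchsbaum over $\mathbf{k}$ if it is pure and for every nonempty face $F$, $\widetilde H_j(\mathrm{lk}_\Delta F)=0$ for $j<d-1-|F|$. A $(d-1)$-dimensional Buchsbaum complex $\Delta$ is Buchsbaum* over $\mathbf{k}$ if for every $p\in|\Delta|$ the canonical map $\widetilde H_{d-1}(|\Delta|)\to\widetilde H_{d-1}(|\Delta|,|\Delta|-p)$ is surjective. $\Delta$ is $m$-Buchsbaum* if $\Delta$ is Buchsbaum and $\Delta-A$ is Buchsbaum* of dimension $d-1$ for every $A\subseteq V(\Delta)$ with $|A|<m$. $\Delta$ is balanced if there is $\kappa:V(\Delta)\to[d]$ with $\kappa(u)\ne\kappa(v)$ for every edge $\{u,v\}$; $\Delta_S=\{\tau\in\Delta:\kappa(\tau)\subseteq S\}$. *)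

(* Defs.v *)
From HB Require Import structures.
From mathcomp Require Import all_boot all_order all_algebra.
Set Implicit Arguments. Unset Strict Implicit. Unset Printing Implicit Defensive.
Import GRing.Theory.
Local Open Scope ring_scope.

Section Complexes.
Variable V : finType.

Definition is_complex (D : {set {set V}}) : Prop :=
  set0 \in D /\ forall F G : {set V}, F \in D -> G \subset F -> G \in D.

Definition verts (D : {set {set V}}) : {set V} := [set v | [set v] \in D].

Definition pure_dim (D : {set {set V}}) (d : nat) : Prop :=
  (forall F, F \in D -> (#|F| <= d)%N) /\
  (forall F, F \in D -> exists2 G, G \in D & (F \subset G) && (#|G| == d)).

Definition link (D : {set {set V}}) (F : {set V}) : {set {set V}} :=
  [set s in D | [disjoint s & F] && (s :|: F \in D)].

Definition delete (D : {set {set V}}) (A : {set V}) : {set {set V}} :=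
  [set s in D | [disjoint s & A]].

Definition costar (D : {set {set V}}) (F : {set V}) : {set {set V}} :=
  [set s in D | ~~ (F \subset s)].

Definition rank_select (d : nat) (kappa : V -> 'I_d) (D : {set {set V}})
  (S : {set 'I_d}) : {set {set V}} :=
  [set t in D | (kappa @: t) \subset S].

Definition balanced (d : nat) (kappa : V -> 'I_d) (D : {set {set V}}) : Prop :=
  forall u v : V, [set u; v] \in D -> u != v -> kappa u != kappa v.

Variable K : fieldType.

(* Oriented simplicial chains with coefficients in K: functions on faces.
   A face G of size n (= dimension n-1) is oriented by the order enum V.
   The augmented chain complex is used (the empty face spans degree -1),
   so homology is reduced. *)
Definition supported (D : {set {set V}}) (n : nat) (c : {set V} -> K) : Prop :=
  forall G, c G != 0 -> (G \in D) && (#|G| == n).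

Definition bsign (v : V) (G : {set V}) : K :=
  (-1) ^+ #|[set u in G | (enum_rank u < enum_rank v)%N]|.

Definition bd (c : {set V} -> K) (G : {set V}) : K :=
  \sum_(v | v \notin G) bsign v G * c (v |: G).

(* reduced homology of D in degree n-1 vanishes: every (n-1)-cycle
   is a boundary *)
Definition Hred_vanish (D : {set {set V}}) (n : nat) : Prop :=
  forall c, supported D n c -> (forall G, bd c G = 0) ->
  exists2 b, supported D n.+1 b & forall G, bd b G = c G.

(* the map H_{d-1}(D) -> H_{d-1}(D, G) (G a subcomplex) is surjective:
   every relative (d-1)-cycle z is homologous mod G to an absolute cycle. *)
Definition Htop_rel_surj (D Gam : {set {set V}}) (d : nat) : Prop :=
  forall z, supported D d z -> (forall G, G \notin Gam -> bd z G = 0) ->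
  exists c, [/\ supported D d c, (forall G, bd c G = 0) &
    exists2 b, supported D d.+1 b &
      forall G, G \notin Gam -> z G = c G + bd b G].

Definition Buchsbaum (D : {set {set V}}) (d : nat) : Prop :=
  pure_dim D d /\
  forall F, F \in D -> F != set0 ->
    forall n : nat, (n + #|F| < d)%N -> Hred_vanish (link D F) n.

(* Buchsbaum* over K, of dimension d-1.  A point p of |D| lies in the
   relative interior of a unique nonempty face F, and |D| - p deformation
   retracts onto |costar D F| compatibly with inclusions, so
   H_{d-1}(|D|,|D|-p) = H_{d-1}(D, costar D F). *)
Definition BuchsbaumStar (D : {set {set V}}) (d : nat) : Prop :=
  Buchsbaum D d /\
  forall F, F \in D -> F != set0 -> Htop_rel_surj D (costar D F) d.

Definition mBuchsbaumStar (m : nat) (D : {set {set V}}) (d : nat) : Prop :=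
  Buchsbaum D d /\
  forall A : {set V}, A \subset verts D -> (#|A| < m)%N ->
    BuchsbaumStar (delete D A) d.

End Complexes.

(* Main.v *)
Require Import Defs.
From HB Require Import structures.
From mathcomp Require Import all_boot all_order all_algebra.
From mathcomp Require Import ring.
From Stdlib Require Import ClassicalEpsilon.
Set Implicit Arguments. Unset Strict Implicit. Unset Printing Implicit Defensive.
Import GRing.Theory.
Local Open Scope ring_scope.

Section Chains.
Variable V : finType.
Variable K : fieldType.
Implicit Types (F G H : {set V}) (x y : {set V} -> K).

Definition rk (u : V) : nat := enum_rank u.
Definition tt_ (u v : V) : K := if (rk u < rk v)%N then -1 else 1.

Lemma rk_inj : injective rk.
Proof. by move=> u v /val_inj /enum_rank_inj. Qed.

Lemma bsignE v G : bsign K v G = \prod_(u in G) tt_ u v.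
Proof.
rewrite /bsign -prodr_const [RHS](bigID (fun u => (rk u < rk v)%N)) /=.
rewrite [X in _ * X]big1 ?mulr1; last by move=> u /andP[_ /negbTE h]; rewrite /tt_ h.
rewrite [RHS](eq_bigr (fun _ => -1)); last by move=> u /andP[_ h]; rewrite /tt_ h.
by apply: eq_bigl => u; rewrite !inE.
Qed.

Lemma tt_sq u v : tt_ u v * tt_ u v = 1.
Proof. by rewrite /tt_; case: ifP; rewrite ?mulrNN mulr1. Qed.

Lemma tt_anti u v : u != v -> tt_ u v = - tt_ v u.
Proof.
move=> nuv; rewrite /tt_.
have : rk u != rk v by apply: contra nuv => /eqP /rk_inj ->.
by case: ltngtP => //; rewrite ?opprK.
Qed.

Lemma bsign_sq v G : bsign K v G * bsign K v G = 1.
Proof. by rewrite bsignE -big_split /= big1 // => u _; rewrite tt_sq. Qed.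

Definition sF F H : K := \prod_(f in F) bsign K f H.

Lemma sF_sq F H : sF F H * sF F H = 1.
Proof. by rewrite /sF -big_split /= big1 // => u _; rewrite bsign_sq. Qed.

Lemma bsignU1 u w H : w \notin H ->
  bsign K u (w |: H) = tt_ w u * bsign K u H.
Proof. by move=> wH; rewrite !bsignE big_setU1 //=. Qed.

Lemma bsignU u F H : [disjoint F & H] ->
  bsign K u (F :|: H) = bsign K u F * bsign K u H.
Proof. by move=> dFH; rewrite !bsignE -bigU //; apply: eq_bigl => x; rewrite !inE. Qed.


Lemma disjU1 w H F : [disjoint (w |: H) & F] = (w \notin F) && [disjoint H & F].
Proof. by rewrite -disjointU1; apply: eq_disjoint => x; rewrite !inE. Qed.

Lemma UD_disj F H : [disjoint H & F] -> (F :|: H) :\: F = H.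
Proof.
move=> d; apply/setP => x; rewrite !inE; case: (boolP (x \in F)) => //= xF.
by rewrite (disjointFl d xF).
Qed.

Lemma UD_sub F G : F \subset G -> F :|: (G :\: F) = G.
Proof.
move/subsetP=> s; apply/setP => x; rewrite !inE; case: (boolP (x \in F)) => //= xF.
by rewrite s.
Qed.

Lemma D_disj F G : [disjoint G :\: F & F].
Proof. by rewrite -setI_eq0; apply/eqP/setP => x; rewrite !inE; case: (x \in F); rewrite ?andbF. Qed.

Definition ext F x H : K := if [disjoint H & F] then sF F H * x (F :|: H) else 0.
Definition join F y G : K := if F \subset G then sF F (G :\: F) * y (G :\: F) else 0.

Lemma sF_U1 F w H : w \notin F -> w \notin H ->
  sF F (w |: H) = (-1) ^+ #|F| * (\prod_(f in F) tt_ f w) * sF F H.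
Proof.
move=> wF wH; rewrite /sF (eq_bigr (fun f => tt_ w f * bsign K f H)); last first.
  by move=> f _; rewrite bsignU1.
rewrite big_split /= -prodrN; congr (_ * _); apply: eq_bigr => f fF.
by rewrite tt_anti //; apply: contraNneq wF => ->.
Qed.

Lemma ext_bd F x H : bd (ext F x) H = (-1) ^+ #|F| * ext F (bd x) H.
Proof.
rewrite /bd /ext; case: (boolP [disjoint H & F]) => dHF; last first.
  rewrite mulr0 big1 // => w _; rewrite disjU1 (negbTE dHF) andbF; exact: mulr0.
rewrite !mulr_sumr [LHS]big_mkcond [RHS]big_mkcond; apply: eq_bigr => w _ /=.
rewrite !inE negb_or; case: (boolP (w \in H)) => wH; rewrite ?andbF //=.
rewrite disjU1 dHF andbT; case: (boolP (w \in F)) => wF /=; first by rewrite mulr0.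
have dFH : [disjoint F & H] by rewrite disjoint_sym.
rewrite setUCA sF_U1 // (bsignU _ dFH) [bsign K w F]bsignE; ring.
Qed.


Lemma ext_join F y H : (forall G, y G != 0 -> [disjoint G & F]) ->
  ext F (join F y) H = y H.
Proof.
move=> hy; rewrite /ext /join; case: (boolP [disjoint H & F]) => d.
  by rewrite subsetUl UD_disj // mulrA sF_sq mul1r.
by apply/esym/eqP; apply: contraNT d => /hy.
Qed.

Lemma ext_sub F x G : F \subset G -> ext F x (G :\: F) = sF F (G :\: F) * x G.
Proof. by move=> s; rewrite /ext D_disj UD_sub. Qed.

Lemma x_ext F x G : F \subset G -> x G = sF F (G :\: F) * ext F x (G :\: F).
Proof. by move=> s; rewrite ext_sub // mulrA sF_sq mul1r. Qed.

Lemma sum_anti (f : V -> V -> K) : (forall u, f u u = 0) ->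
  (forall u v, f u v = - f v u) -> \sum_u \sum_v f u v = 0.
Proof.
move=> f0 fa.
pose A u := \sum_v (if (rk u < rk v)%N then f u v else 0).
pose B u := \sum_v (if (rk v < rk u)%N then f u v else 0).
have E : forall u, \sum_v f u v = A u + B u.
  move=> u; rewrite /A /B -big_split /=; apply: eq_bigr => v _.
  case: ltngtP => h; rewrite ?addr0 ?add0r //.
  by rewrite (rk_inj h) f0.
rewrite (eq_bigr _ (fun u _ => E u)) big_split /= /B exchange_big /=.
rewrite -big_split big1 // => u _; rewrite /A -big_split big1 // => v _ /=.
by case: ifP; rewrite ?addr0 // (fa u v) addrN.
Qed.

Lemma bd_bd x G : bd (bd x) G = 0.
Proof.
pose f u v := if (u \notin G) && (v \notin u |: G) then
  bsign K u G * bsign K v (u |: G) * x (v |: (u |: G)) else 0.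
have -> : bd (bd x) G = \sum_u \sum_v f u v.
  rewrite /bd big_mkcond; apply: eq_bigr => u _ /=; rewrite /f.
  case: (boolP (u \in G)) => uG /=; first by rewrite big1.
  rewrite mulr_sumr big_mkcond; apply: eq_bigr => v _ /=.
  by case: ifP; rewrite ?mulr0 // mulrA.
apply: sum_anti.
  by move=> u; rewrite /f !inE eqxx /= andbF.
move=> u v; rewrite /f !inE !negb_or.
case: (boolP (u == v)) => [/eqP ->|nuv]; first by rewrite eqxx /= !andbF oppr0.
rewrite eq_sym nuv /=; case: (boolP (u \in G)) => uG; case: (boolP (v \in G)) => vG;
  rewrite /= ?oppr0 //.
rewrite setUCA (bsignU1 _ uG) (bsignU1 _ vG) (tt_anti nuv); ring.
Qed.


Lemma bd_eq x y H : (forall G, x G = y G) -> bd x H = bd y H.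
Proof. by move=> e; apply: eq_bigr => v _; rewrite e. Qed.

Lemma bd_add x y H : bd (fun G => x G + y G) H = bd x H + bd y H.
Proof. by rewrite /bd -big_split; apply: eq_bigr => v _; rewrite mulrDr. Qed.

Lemma bd_scale a x H : bd (fun G => a * x G) H = a * bd x H.
Proof. by rewrite /bd mulr_sumr; apply: eq_bigr => v _; rewrite mulrCA. Qed.

Lemma bd_zero H : bd (fun _ : {set V} => (0 : K)) H = 0.
Proof. by rewrite /bd big1 // => v _; rewrite mulr0. Qed.

Lemma bd_sum (I : finType) (P : pred I) (f : I -> {set V} -> K) H :
  bd (fun G => \sum_(i | P i) f i G) H = \sum_(i | P i) bd (f i) H.
Proof.
rewrite /bd exchange_big; apply: eq_bigr => v _; rewrite mulr_sumr.
by apply: eq_bigr.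
Qed.

Lemma ext_eq F x y H : (forall G, x G = y G) -> ext F x H = ext F y H.
Proof. by move=> e; rewrite /ext e. Qed.

Lemma ext_add F x y H : ext F (fun G => x G + y G) H = ext F x H + ext F y H.
Proof. by rewrite /ext; case: ifP; rewrite ?addr0 // mulrDr. Qed.

Lemma ext_sum F (I : finType) (P : pred I) (f : I -> {set V} -> K) H :
  ext F (fun G => \sum_(i | P i) f i G) H = \sum_(i | P i) ext F (f i) H.
Proof.
rewrite /ext; case: ifP => _; first by rewrite mulr_sumr.
by rewrite big1.
Qed.

Lemma sum_nz (I : finType) (P : pred I) (f : I -> K) :
  \sum_(i | P i) f i != 0 -> exists i, P i && (f i != 0).
Proof.
move=> h; apply/existsP; apply: contraNT h => /existsPn h.
by apply/eqP/big1 => i Pi; move: (h i); rewrite Pi /= negbK => /eqP.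
Qed.

Lemma bd_nz x G : bd x G != 0 -> exists2 v, v \notin G & x (v |: G) != 0.
Proof.
case/sum_nz => v /andP[vG]; case: (boolP (x (v |: G) == 0)) => [/eqP->|];
  first by rewrite mulr0 eqxx.
by exists v.
Qed.

Lemma supported_bd (D : {set {set V}}) n x : is_complex D ->
  supported D n.+1 x -> supported D n (bd x).
Proof.
move=> [_ cD] sx G /bd_nz [v vG] /sx /andP[vGD].
rewrite cardsU1 vG add1n eqSS => ->; rewrite andbT.
by apply: cD vGD _; apply: subsetUr.
Qed.

Lemma bd_out (D : {set {set V}}) n x G : is_complex D ->
  supported D n x -> G \notin D -> bd x G = 0.
Proof.
move=> [_ cD] sx GD; apply/eqP; apply: contraNT GD => /bd_nz [v vG] /sx /andP[h _].
by apply: cD h _; apply: subsetUr.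
Qed.

End Chains.

Section Supp.
Variable V : finType.
Variable K : fieldType.
Implicit Types (F G H : {set V}) (x y : {set V} -> K).

Lemma cardsU_disj F H : [disjoint F & H] -> #|F :|: H| = (#|F| + #|H|)%N.
Proof. by move=> d; rewrite cardsU (disjoint_setI0 d) cards0 subn0. Qed.

Lemma disj1 G (v : V) : [disjoint G & [set v]] = (v \notin G).
Proof. by rewrite disjoint_sym disjoints1. Qed.

Lemma join_nz F y X : join F y X != 0 -> F \subset X /\ y (X :\: F) != 0.
Proof.
rewrite /join; case: ifP => [s|_]; last by rewrite eqxx.
by case: (boolP (y (X :\: F) == 0)) => [/eqP ->|]; rewrite ?mulr0 ?eqxx.
Qed.

Lemma ext_nz F x H : ext F x H != 0 -> [disjoint H & F] /\ x (F :|: H) != 0.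
Proof.
rewrite /ext; case: ifP => [d|_]; last by rewrite eqxx.
by case: (boolP (x (F :|: H) == 0)) => [/eqP ->|]; rewrite ?mulr0 ?eqxx.
Qed.

Lemma supported_join (L : {set {set V}}) F k y :
  supported (link L F) k y -> supported L (k + #|F|) (join F y).
Proof.
move=> sy X /join_nz [sFX] /sy /andP[]; rewrite inE => /and3P[_ _].
rewrite setUC UD_sub // => -> /eqP <-; rewrite cardsDS // subnK ?eqxx //.
exact: subset_leq_card.
Qed.

Lemma supported_ext (L : {set {set V}}) F k x : is_complex L ->
  supported L k x -> supported (link L F) (k - #|F|) (ext F x).
Proof.
move=> [_ cL] sx H /ext_nz [d] /sx /andP[FH /eqP <-].
rewrite inE d setUC FH andbT /=; apply/andP; split.
  by rewrite andbT; apply: cL FH _; apply: subsetUr.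
by rewrite cardsU_disj 1?disjoint_sym // addKn.
Qed.

Lemma supp_link_disj (L : {set {set V}}) F k y G :
  supported (link L F) k y -> y G != 0 -> [disjoint G & F].
Proof. by move=> sy /sy /andP[]; rewrite inE => /and3P[]. Qed.

Lemma ext_bd' F x H : ext F (bd x) H = (-1) ^+ #|F| * bd (ext F x) H.
Proof. by rewrite ext_bd mulrA -expr2 sqrr_sign mul1r. Qed.


Lemma vanish_drop (L L' : {set {set V}}) (col : pred V) n :
  is_complex L ->
  (forall G, G \in L -> forall v w, v \in G -> w \in G -> col v -> col w -> v = w) ->
  (forall G, (G \in L') = (G \in L) && [forall v in G, ~~ col v]) ->
  Hred_vanish K L n ->
  (forall v, col v -> Hred_vanish K (link L [set v]) n) ->
  Hred_vanish K L' n.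
Proof.
move=> cL uL L'E HL Hlk c sc cyc.
have scL : supported L n c.
  by move=> G /sc /andP[]; rewrite L'E => /andP[-> _] ->.
case: (HL c scL cyc) => b sb bdb.
have c_col : forall v G, col v -> v \in G -> c G = 0.
  move=> v G cv vG; apply/eqP; apply: contraT => /sc /andP[].
  by rewrite L'E => /andP[_ /forall_inP h] _; move: (h v vG); rewrite cv.
have Hb : forall v, exists e, col v -> supported (link L [set v]) n.+1 e /\
    (forall G, bd e G = ext [set v] b G).
  move=> v; case: (boolP (col v)) => cv; last by exists (fun _ => 0).
  have sbv : supported (link L [set v]) n (ext [set v] b).
    by have := supported_ext (F:=[set v]) cL sb; rewrite cards1 subn1.
  have cyv : forall G, bd (ext [set v] b) G = 0.
    move=> G; rewrite ext_bd /ext; case: ifP => d; last by rewrite mulr0.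
    by rewrite bdb (c_col v) ?mulr0 // !inE eqxx.
  case: (Hlk v cv _ sbv cyv) => e se be; exists e => _; split=> // G.
pose e v := proj1_sig (constructive_indefinite_description _ (Hb v)).
have eP : forall v, col v -> supported (link L [set v]) n.+1 (e v) /\
    (forall G, bd (e v) G = ext [set v] b G).
  by move=> v; rewrite /e; case: constructive_indefinite_description.
pose b' G := b G + \sum_(v | col v) bd (join [set v] (e v)) G.
exists b'; last first.
  move=> G; rewrite /b' bd_add bd_sum big1 ?addr0 // => v _; exact: bd_bd.
have sjv : forall v, col v -> supported L n.+2 (join [set v] (e v)).
  move=> v cv; have := supported_join (eP v cv).1; by rewrite cards1 addn1.
have sb'L : supported L n.+1 b'.
  move=> G; rewrite /b'; case: (boolP (b G == 0)) => [/eqP ->|bG _]; last exact: sb.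
  rewrite add0r => /sum_nz [v /andP[cv]]; exact: (supported_bd cL (sjv v cv)).
have ext0 : forall w, col w -> forall H, ext [set w] b' H = 0.
  move=> w cw H; rewrite /b' ext_add ext_sum (bigD1 w) //=.
  rewrite [X in _ + (_ + X)]big1 ?addr0; last first.
    move=> v /andP[cv nvw]; rewrite /ext; case: ifP => // d; apply/eqP.
    rewrite mulf_eq0; apply/orP; right; apply: contraT => /bd_nz [u uX] jn.
    have /andP[XL _] := sjv v cv _ jn.
    have [s1 _] := join_nz jn.
    suff vw : v = w by rewrite vw eqxx in nvw.
    apply: (uL _ XL) => //.
      by move: s1; rewrite sub1set.
    by rewrite !inE eqxx orbT.
  rewrite ext_bd' cards1 expr1.
  rewrite (bd_eq (y := e w)); last first.
    by move=> G; apply: ext_join => X; apply: supp_link_disj (eP w cw).1.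
  by rewrite (eP w cw).2 mulN1r addrN.
move=> G b'G; have /andP[GL ->] := sb'L G b'G; rewrite L'E GL andbT /=.
apply/forall_inP => w wG; apply/negP => cw; move/eqP: b'G; apply.
by rewrite (x_ext b' (_ : [set w] \subset G)) ?ext0 ?mulr0 // sub1set.
Qed.

End Supp.

Section Cx.
Variable V : finType.
Variable K : fieldType.
Variable d : nat.
Variable kappa : V -> 'I_d.
Implicit Types (F G H : {set V}) (x y : {set V} -> K) (D L : {set {set V}}).

Definition colin D (T : {set 'I_d}) := forall G, G \in D -> kappa @: G \subset T.
Definition injf D := forall G, G \in D -> {in G &, injective kappa}.

Lemma disjUs (A B C : {set V}) : [disjoint A :|: B & C] = [disjoint A & C] && [disjoint B & C].
Proof. by rewrite -!setI_eq0 setIUl setU_eq0. Qed.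

Lemma disjsU (A B C : {set V}) : [disjoint A & B :|: C] = [disjoint A & B] && [disjoint A & C].
Proof. by rewrite ![[disjoint A & _]]disjoint_sym disjUs. Qed.

Lemma rs_complex D S : is_complex D -> is_complex (rank_select kappa D S).
Proof.
move=> [D0 cD]; split; first by rewrite inE D0 imset0 sub0set.
move=> F G; rewrite !inE => /andP[FD FS] GF; rewrite (cD _ _ FD GF) /=.
exact: subset_trans (imsetS _ GF) FS.
Qed.

Lemma link_complex D F : is_complex D -> F \in D -> is_complex (link D F).
Proof.
move=> [D0 cD] FD; split; first by rewrite inE D0 set0U FD -setI_eq0 set0I eqxx.
move=> A B; rewrite !inE => /and3P[AD dAF AFD] BA.
rewrite (cD _ _ AD BA) /=; apply/andP; split.
  exact: disjointWl BA dAF.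
by apply: cD AFD _; apply: setSU.
Qed.

Lemma delete_complex D A : is_complex D -> is_complex (delete D A).
Proof.
move=> [D0 cD]; split; first by rewrite inE D0 -setI_eq0 set0I eqxx.
move=> F G; rewrite !inE => /andP[FD dFA] GF; rewrite (cD _ _ FD GF) /=.
exact: disjointWl GF dFA.
Qed.

Lemma link_link D F v : is_complex D -> v \notin F ->
  link (link D F) [set v] = link D (v |: F).
Proof.
move=> [D0 cD] vF; apply/setP => s; rewrite !inE !disj1 disjsU disj1.
apply/idP/idP.
  case/and3P=> /and3P[sD dsF sFD] vs /and3P[_ _ h].
  by rewrite sD vs dsF /= setUA.
case/and3P=> sD /andP[vs dsF] h; rewrite sD dsF vs /=.
have svD : s :|: [set v] \in D by apply: cD h _; rewrite setUA subsetUl.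
rewrite svD -setUA h disjUs dsF disjoints1 vF !andbT.
by apply: cD h _; rewrite setUCA subsetUr.
Qed.

Lemma vanish_empty L n : (forall G, G \notin L) -> Hred_vanish K L n.
Proof.
move=> e c sc _; exists (fun _ => 0).
  by move=> G; rewrite eqxx.
move=> G; rewrite bd_zero; apply/esym/eqP; apply: contraT => /sc.
by rewrite (negbTE (e G)).
Qed.


Lemma card_col D G : injf D -> G \in D -> #|kappa @: G| = #|G|.
Proof. by move=> iD GD; rewrite card_in_imset //; exact: iD. Qed.

Lemma full_colors D T G : injf D -> colin D T -> G \in D -> #|G| = #|T| ->
  kappa @: G = T.
Proof.
move=> iD cT GD cG; apply/eqP; by rewrite eqEcard cT //= (@card_col _ _ iD GD) cG leqnn.
Qed.

Lemma rs_size D S F : injf D -> F \in rank_select kappa D S -> (#|F| <= #|S|)%N.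
Proof.
move=> iD; rewrite inE => /andP[FD FS]; rewrite -(@card_col _ _ iD FD).
exact: subset_leq_card.
Qed.

Lemma rs_pure D S i : is_complex D -> injf D -> colin D (i |: S) -> i \notin S ->
  pure_dim D #|i |: S| -> pure_dim (rank_select kappa D S) #|S|.
Proof.
move=> [_ cD] iD cS iS [_ pD]; split; first by move=> F; exact: rs_size.
move=> F; rewrite inE => /andP[FD FS]; have [G GD /andP[FG /eqP cG]] := pD F FD.
pose G' := [set x in G | kappa x \in S].
have G'G : G' \subset G by apply/subsetP => x; rewrite inE => /andP[].
have G'D : G' \in D by apply: cD GD G'G.
have G'S : kappa @: G' \subset S.
  by apply/subsetP => c /imsetP [x]; rewrite inE => /andP[_ ?] ->.
exists G'; first by rewrite inE G'D G'S.
apply/andP; split.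
  apply/subsetP => x xF; rewrite inE (subsetP FG _ xF) /=.
  by apply: (subsetP FS); apply: imset_f.
rewrite -(@card_col _ _ iD G'D); suff -> : kappa @: G' = S by [].
apply/eqP; rewrite eqEsubset G'S /=; apply/subsetP => c cs.
have : c \in kappa @: G by rewrite (full_colors iD cS GD cG) !inE cs orbT.
by case/imsetP => x xG e; rewrite e; apply: imset_f; rewrite inE xG -e.
Qed.


Lemma buch_step D S i : is_complex D -> injf D -> colin D (i |: S) -> i \notin S ->
  Buchsbaum K D #|i |: S| -> Buchsbaum K (rank_select kappa D S) #|S|.
Proof.
move=> cD iD cS iS [pD bD]; split; first exact: (rs_pure cD iD cS iS pD).
move=> F FDS F0 n hn.
have [FD FS] : F \in D /\ kappa @: F \subset S by move: FDS; rewrite inE => /andP[].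
have cardT : #|i |: S| = #|S|.+1 by rewrite cardsU1 iS.
apply: (@vanish_drop V K (link D F) (link (rank_select kappa D S) F) (fun v => kappa v == i) n).
- exact: link_complex.
- move=> G; rewrite inE => /and3P[GD _ _] v w vG wG /eqP cv /eqP cw.
  by apply: (iD _ GD) => //; rewrite cv cw.
- move=> G; rewrite !inE; apply/idP/idP.
  + case/and3P => /andP[GD GS] dGF /andP[GFD _]; rewrite GD dGF GFD /=.
    apply/forall_inP => v vG; apply: contraNneq iS => <-; apply: (subsetP GS).
    exact: imset_f.
  + case/andP => /and3P[GD dGF GFD] /forall_inP h; rewrite GD dGF GFD /=.
    have GS : kappa @: G \subset S.
      apply/subsetP => c /imsetP [x xG ->].
      have := subsetP (cS _ GD) (kappa x) (imset_f _ xG).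
      by rewrite !inE (negbTE (h x xG)).
    by rewrite GS imsetU subUset GS FS.
- by apply: bD => //; rewrite cardT; apply: leqW.
- move=> v /eqP cv; case: (boolP ([set v] \in link D F)) => vL.
  + have := vL; rewrite inE disjoints1 => /and3P[_ vF vFD].
    rewrite link_link //; apply: bD => //.
      by apply/set0Pn; exists v; rewrite !inE eqxx.
    by rewrite cardsU1 vF cardT add1n addnS ltnS.
  + apply: vanish_empty => G; rewrite inE; apply/negP => /and3P[_ _ h].
    move/negP: vL; apply; have [_ cL] := link_complex cD FD.
    by apply: cL h _; apply: subsetUr.
Qed.


Lemma bstar_step D S i : is_complex D -> injf D -> colin D (i |: S) -> i \notin S ->
  BuchsbaumStar K D #|i |: S| -> BuchsbaumStar K (rank_select kappa D S) #|S|.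
Proof.
move=> cD iD cS iS [BD HD]; split; first exact: (buch_step cD iD cS iS BD).
have cardT : #|i |: S| = #|S|.+1 by rewrite cardsU1 iS.
move: (BD) => [[pD1 pD2] bD]; rewrite cardT in pD1 bD HD.
move: (cD) => [_ cDs].
move=> F FD' F0 z sz rz.
have [FD FS] : F \in D /\ kappa @: F \subset S by move: FD'; rewrite inE => /andP[].
have Fr : (#|F| <= #|S|)%N := rs_size iD FD'.
have zF : forall G, F \subset G -> bd z G = 0.
  by move=> G FG; apply: rz; rewrite inE FG andbF.
have szD : supported D #|S| z.
  by move=> G /sz /andP[]; rewrite inE => /andP[-> _] ->.
have z_col : forall G v, v \in G -> kappa v = i -> z G = 0.
  move=> G v vG cv; apply/eqP; apply: contraT => /sz /andP[]; rewrite inE => /andP[_ GS] _.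
  have : kappa v \in S by apply: (subsetP GS); apply: imset_f.
  by rewrite cv (negbTE iS).
pose y H := (-1) ^+ #|F| * ext F z H.
have sy : supported (link D F) (#|S| - #|F|) y.
  move=> H; rewrite /y mulf_eq0 negb_or => /andP[_]; exact: (supported_ext cD szD).
have cy : forall H, bd y H = 0.
  move=> H; rewrite /y bd_scale ext_bd mulrA -expr2 sqrr_sign mul1r /ext.
  by case: ifP => // _; rewrite zF ?mulr0 // subsetUl.
have [Y sY bY] : exists2 Y, supported (link D F) (#|S| - #|F|).+1 Y & forall H, bd Y H = y H.
  have h : (#|S| - #|F| + #|F| < #|S|.+1)%N by rewrite subnK.
  exact: (bD F FD F0 _ h y sy cy).
pose W := join F Y.
have sW : supported D #|S|.+1 W.
  by have := supported_join sY; rewrite addSn subnK.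
have bW : forall G, F \subset G -> bd W G = z G.
  move=> G FG; rewrite (x_ext (bd W) FG) (x_ext z FG); congr (_ * _).
  rewrite ext_bd' (bd_eq (y:=Y)); last first.
    by move=> H; apply: ext_join => X; apply: supp_link_disj sY.
  by rewrite bY /y mulrA -expr2 sqrr_sign mul1r.
have HC : forall v, exists C, kappa v = i -> [/\ supported D #|S|.+1 C,
    forall G, bd C G = 0 & forall G, v \in G -> F \subset G -> C G = W G].
  move=> v; case: (eqVneq (kappa v) i) => cv; last by exists (fun _ => 0) => h; rewrite h eqxx in cv.
  case: (boolP (v |: F \in D)) => vFD; last first.
    exists (fun _ => 0) => _; split; [by move=> G; rewrite eqxx | exact: bd_zero | ].
    move=> G vG FG; apply/esym/eqP; apply: contraT => /sW /andP[GD _].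
    have : v |: F \in D by apply: cDs GD _; rewrite subUset sub1set vG FG.
    by rewrite (negbTE vFD).
  pose zv G := if v \in G then W G else 0.
  have szv : supported D #|S|.+1 zv.
    by move=> G; rewrite /zv; case: ifP => _; [exact: sW | rewrite eqxx].
  have rzv : forall G, G \notin costar D (v |: F) -> bd zv G = 0.
    move=> G; rewrite inE negb_and negbK => /orP[GD | vFG].
      exact: bd_out cD szv GD.
    have vG : v \in G by apply: (subsetP vFG); rewrite !inE eqxx.
    have FG : F \subset G by apply: subset_trans vFG; apply: subsetUr.
    rewrite (_ : bd zv G = bd W G); last by apply: eq_bigr => u _; rewrite /zv !inE vG orbT.
    by rewrite bW // (z_col G v).
  have vF0 : v |: F != set0 by apply/set0Pn; exists v; rewrite !inE eqxx.
  have [C [sC cC [b sb hb]]] := HD (v |: F) vFD vF0 zv szv rzv.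
  exists C => _; split => // G vG FG.
  have b0 : forall G, b G = 0.
    move=> X; apply/eqP; apply: contraT => /sb /andP[XD /eqP cX].
    by have := pD1 X XD; rewrite cX ltnn.
  have := hb G; rewrite inE subUset sub1set vG FG andbF /= => /(_ isT).
  by rewrite /zv vG (bd_eq (y := fun _ => 0)) // bd_zero addr0.
pose C v := proj1_sig (constructive_indefinite_description _ (HC v)).
have CP : forall v, kappa v = i -> [/\ supported D #|S|.+1 (C v),
    forall G, bd (C v) G = 0 & forall G, v \in G -> F \subset G -> C v G = W G].
  by move=> v; rewrite /C; case: constructive_indefinite_description.
pose c G := \sum_(v | kappa v == i) ext [set v] (C v) G.
have sc : supported (rank_select kappa D S) #|S| c.
  move=> G /sum_nz [v /andP[/eqP cv]] /ext_nz [dG]; rewrite disj1 in dG.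
  have [sCv _ _] := CP v cv.
  move=> /sCv /andP[vGD]; rewrite cardsU1 dG add1n eqSS => ->; rewrite andbT inE.
  have GD : G \in D by apply: cDs vGD _; apply: subsetUr.
  rewrite GD /=; apply/subsetP => c' /imsetP [x xG ->].
  have := subsetP (cS _ GD) _ (imset_f kappa xG); rewrite !inE => /orP[/eqP kx|//].
  have xv : x = v.
    by apply: (iD _ vGD); rewrite ?kx ?cv // !inE ?eqxx ?xG ?orbT.
  by move: dG; rewrite -xv xG.
exists c; split => //.
  move=> G; rewrite /c bd_sum big1 // => v /eqP cv; have [_ cCv _] := CP v cv.
  rewrite ext_bd /ext; case: ifP => _; last by rewrite mulr0.
  by rewrite cCv !mulr0.
exists (fun _ => 0); first by move=> G; rewrite eqxx.
move=> G; rewrite bd_zero addr0.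
case: (boolP ((G \in rank_select kappa D S) && (#|G| == #|S|))) => [/andP[GD' /eqP cG] | h].
  rewrite inE GD' /= negbK => FG.
  rewrite -(bW G FG) /bd /c.
  rewrite (bigID (fun u => kappa u == i)) /= [X in _ + X]big1 ?addr0; last first.
    move=> u /andP[uG cu]; apply/eqP; rewrite mulf_eq0; apply/orP; right.
    apply: contraT => /sW /andP[uGD /eqP cuG].
    have e := @full_colors D (i |: S) (u |: G) iD cS uGD (etrans cuG (esym cardT)).
    have : i \in kappa @: (u |: G) by rewrite e !inE eqxx.
    case/imsetP => x; rewrite !inE => /orP[/eqP -> | xG] ix; first by rewrite ix eqxx in cu.
    move: GD'; rewrite inE => /andP[_ GS].
    have : kappa x \in S by apply: (subsetP GS); apply: imset_f.
    by rewrite -ix (negbTE iS).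
  rewrite [RHS](bigID (fun v => v \in G)) /= [X in X + _]big1 ?add0r; last first.
    by move=> v /andP[_ vG]; rewrite /ext disj1 vG.
  apply: eq_big => [v|v /andP[vG /eqP cv]]; first by rewrite andbC.
  have [_ _ eW] := CP v cv.
  rewrite /ext disj1 vG /sF big_set1 eW // ?inE ?eqxx //.
  by apply: subset_trans FG _; apply: subsetUr.
move=> _.
have -> : z G = 0.
  by apply/eqP; apply: contraT => /sz; rewrite (negbTE h).
by apply/esym/eqP; apply: contraT => /sc; rewrite (negbTE h).
Qed.

End Cx.

Section Ind.
Variable V : finType.
Variable d : nat.
Variable kappa : V -> 'I_d.
Implicit Types (D : {set {set V}}).

Lemma injf_balanced D : is_complex D -> balanced kappa D -> injf kappa D.
Proof.
move=> [_ cD] bal G GD u v uG vG e; apply/eqP; apply: contraT => nuv.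
have : [set u; v] \in D by apply: cD GD _; rewrite subUset !sub1set uG vG.
by move/bal => /(_ nuv); rewrite e eqxx.
Qed.

Lemma injf_sub D D' : injf kappa D -> (forall G, G \in D' -> G \in D) -> injf kappa D'.
Proof. by move=> iD s G /s; apply: iD. Qed.

Lemma rs_rs D (S1 S : {set 'I_d}) : S \subset S1 ->
  rank_select kappa (rank_select kappa D S1) S = rank_select kappa D S.
Proof.
move=> s; apply/setP => G; rewrite !inE -andbA; case: (G \in D) => //=.
by case: (boolP (_ \subset S)) => h; rewrite ?andbF // andbT (subset_trans h s).
Qed.

Lemma rs_T D : rank_select kappa D setT = D.
Proof. by apply/setP => G; rewrite !inE subsetT andbT. Qed.

Lemma rs_ind (P : {set {set V}} -> nat -> Prop) D :
  is_complex D -> injf kappa D -> P D d ->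
  (forall D' (S : {set 'I_d}) (i : 'I_d), is_complex D' -> injf kappa D' -> colin kappa D' (i |: S) ->
     i \notin S -> P D' #|i |: S| -> P (rank_select kappa D' S) #|S|) ->
  forall S, P (rank_select kappa D S) #|S|.
Proof.
move=> cD iD PD step S.
move: {2}(#|~: S|) (leqnn #|~: S|) => n; elim: n S => [|n IH] S hS.
  have e : ~: S = set0 by apply: cards0_eq; apply/eqP; rewrite -leqn0.
  have -> : S = setT by rewrite -(setCK S) e setC0.
  by rewrite rs_T cardsT card_ord.
case: (boolP [exists i, i \notin S]) => [/existsP [i iS]|]; last first.
  move/existsPn => h; have -> : S = setT by apply/setP => x; rewrite inE; move: (h x); rewrite negbK.
  by rewrite rs_T cardsT card_ord.
have h1 : (#|~: (i |: S)| <= n)%N.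
  have e : ~: (i |: S) = (~: S) :\ i by apply/setP => x; rewrite !inE negb_or andbC.
  by rewrite e; move: hS; rewrite (cardsD1 i (~: S)) inE iS add1n ltnS.
have := step (rank_select kappa D (i |: S)) S i (rs_complex kappa _ cD) _ _ iS (IH _ h1).
rewrite rs_rs ?subsetUr //; apply.
  by apply: injf_sub iD _ => G; rewrite inE => /andP[].
by move=> G; rewrite inE => /andP[].
Qed.

End Ind.

Lemma delete_rs (V : finType) d (kappa : V -> 'I_d) (D : {set {set V}}) S A :
  delete (rank_select kappa D S) A = rank_select kappa (delete D A) S.
Proof. by apply/setP => G; rewrite !inE andbAC. Qed.

Theorem mainTheorem3 (K : fieldType) (V : finType) (m d : nat)
  (D : {set {set V}}) (kappa : V -> 'I_d) :
  (0 < m)%N ->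
  is_complex D ->
  balanced kappa D ->
  mBuchsbaumStar K m D d ->
  forall S : {set 'I_d}, S != set0 -> S != setT ->
    mBuchsbaumStar K m (rank_select kappa D S) #|S|.
Proof.
move=> _ cD bal [BD HA] S _ _.
have iD := injf_balanced cD bal.
split.
  apply: (rs_ind (P := Buchsbaum K)) => // D' S' i cD' iD' cS iS.
  exact: buch_step.
move=> A AV Am; rewrite delete_rs.
have AV' : A \subset verts D.
  apply: subset_trans AV _; apply/subsetP => v; rewrite !inE => /andP[] //.
apply: (rs_ind (P := BuchsbaumStar K)).
- exact: delete_complex.
- by apply: injf_sub iD _ => G; rewrite inE => /andP[].
- exact: HA.
- move=> D' S' i cD' iD' cS iS; exact: bstar_step.
Qed.
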